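(* Let $W,V$ be B-DMCs, $N=2^n$, $i\in\{1,\dots,N\}$, and let $y_1^{2N}$ be distributed according to $W(y_1^{2N}|0_1^{2N})=W(y_1^N|0_1^N)W(y_{N+1}^{2N}|0_1^N)$. Write $L_1=L_{V_N^{(i)}}(y_1^N)$. For $j\in\{2i-1,2i\}$ and $\bowtie\in\{\ge,\le\}$ define, for $b\in\{0,1\}$, $g^{\bowtie}_j(b)=\mathbb E_W\big[\mathbf 1\{L_{V_{2N}^{(j)}}(y_1^{2N})\bowtie1\}\,\big|\,\mathbf 1\{L_1\bowtie1\}=b\big]$ (whenever the conditioning event has positive probability). Then: (a) $g^{\ge}_{2i}(1)\ge g^{\ge}_{2i}(0)$ and $g^{\le}_{2i}(1)\ge g^{\le}_{2i}(0)$; (b) if $\mathbb P_W[L_{V_N^{(i)}}(y_1^N)\le1]\ge\mathbb P_W[L_{V_N^{(i)}}(y_1^N)\ge1]$, then $g^{\ge}_{2i-1}(1)\ge g^{\ge}_{2i-1}(0)$ and $g^{\le}_{2i-1}(1)\ge g^{\le}_{2i-1}(0)$.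
   Context: A B-DMC $W:\{0,1\}\to\mathcal Y$ is given by transition probabilities $W(y|x)$, $\mathcal Y$ finite; $L_W(y)=W(y|1)/W(y|0)$. For a B-DMC $W$: $W^-(y_1y_2|u_1)=\sum_{u_2}\tfrac12W(y_1|u_1\oplus u_2)W(y_2|u_2)$, $W^+(y_1y_2u_1|u_2)=\tfrac12W(y_1|u_1\oplus u_2)W(y_2|u_2)$. Synthetic channels: $W_1^{(1)}=W$, $W_{2N}^{(2i-1)}=(W_N^{(i)})^-$, $W_{2N}^{(2i)}=(W_N^{(i)})^+$; an output of $V_N^{(i)}$ is written $(y_1^N,u_1^{i-1})$ as in Arıkan's construction and $L_{V_N^{(i)}}(y_1^N):=L_{V_N^{(i)}}(y_1^N,0_1^{i-1})$. With $L_1=L_{V_N^{(i)}}(y_1^N)$, $L_2=L_{V_N^{(i)}}(y_{N+1}^{2N})$: $L_{V_{2N}^{(2i-1)}}(y_1^{2N})=\frac{L_1+L_2}{1+L_1L_2}$, $L_{V_{2N}^{(2i)}}(y_1^{2N})=L_1L_2$. Notation: $W(y_1^N|0_1^N)=\prod_jW(y_j|0)$, $\mathbb P_W[E]=\sum_{y_1^N}W(y_1^N|0_1^N)\mathbf 1\{E\}$. *)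

(* Defs.v *)
From HB Require Import structures.
From mathcomp Require Import all_boot all_order all_algebra.
Set Implicit Arguments. Unset Strict Implicit. Unset Printing Implicit Defensive.
Import Order.TTheory GRing.Theory Num.Theory.
Local Open Scope ring_scope.

(* A binary-input channel: an output type and transition probabilities
   tp y u = W(y|u)  (input bit u : bool, false = 0, true = 1). *)
Record chan (R : Type) := Chan { out : Type ; tp : out -> bool -> R }.
Arguments tp {R} c _ _.

Definition is_bdmc (R : realFieldType) (Y : finType) (W : Y -> bool -> R) :=
  (forall y u, 0 <= W y u) /\ (forall u, \sum_(y : Y) W y u = 1).

Definition chan_minus (R : realFieldType) (C : chan R) : chan R :=
  @Chan R (out C * out C)
    (fun y u1 => \sum_(u2 : bool) 2^-1 * tp C y.1 (addb u1 u2) * tp C y.2 u2).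

Definition chan_plus (R : realFieldType) (C : chan R) : chan R :=
  @Chan R (out C * out C * bool)
    (fun y u2 => 2^-1 * tp C y.1.1 (addb y.2 u2) * tp C y.1.2 u2).

(* synth C n k = C_N^{(k+1)} with N = 2^n (0-based index k):
   C_{2N}^{(2i-1)} = (C_N^{(i)})^-,  C_{2N}^{(2i)} = (C_N^{(i)})^+. *)
Fixpoint synth (R : realFieldType) (C : chan R) (n k : nat) : chan R :=
  match n with
  | 0 => C
  | n'.+1 => if odd k then chan_plus (synth C n' k./2)
             else chan_minus (synth C n' k./2)
  end.

Lemma pow2_gt0 (n : nat) : (0 < 2 ^ n)%N.
Proof. by rewrite expn_gt0. Qed.

Lemma lo_proof (n : nat) (j : 'I_(2 ^ n)) : (j < 2 ^ n.+1)%N.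
Proof.
by apply: (leq_trans (ltn_ord j)); rewrite expnS mul2n -addnn leq_addr.
Qed.

Lemma hi_proof (n : nat) (j : 'I_(2 ^ n)) : (j + 2 ^ n < 2 ^ n.+1)%N.
Proof. by rewrite expnS mul2n -addnn ltn_add2r. Qed.

Definition lo (n : nat) (j : 'I_(2 ^ n)) : 'I_(2 ^ n.+1) := Ordinal (lo_proof j).
Definition hi (n : nat) (j : 'I_(2 ^ n)) : 'I_(2 ^ n.+1) := Ordinal (hi_proof j).

(* The output (y_1^N, 0_1^{i-1}) of C_N^{(i)}, as an element of the output
   type of synth C n (i-1). *)
Fixpoint zout (R : realFieldType) (C : chan R) (n k : nat) :
  ('I_(2 ^ n) -> out C) -> out (synth C n k) :=
  match n return ('I_(2 ^ n) -> out C) -> out (synth C n k) with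
  | 0 => fun y => y (Ordinal (pow2_gt0 0))
  | n'.+1 => fun y =>
      let z1 := @zout R C n' k./2 (fun j => y (lo j)) in
      let z2 := @zout R C n' k./2 (fun j => y (hi j)) in
      (if odd k as b
          return out (if b then chan_plus (synth C n' k./2)
                      else chan_minus (synth C n' k./2))
       then (z1, z2, false) else (z1, z2))
  end.

Arguments zout {R} C n k y.

(* Comparisons of a likelihood ratio L_C(z) = C(z|1)/C(z|0) with 1, in the
   usual extended sense (L = +oo when C(z|0) = 0 < C(z|1)):
   L >= 1  iff  C(z|1) >= C(z|0);   L <= 1  iff  C(z|1) <= C(z|0). *)
Definition lr_ge1 (R : realFieldType) (C : chan R) (z : out C) : bool :=
  tp C z false <= tp C z true.
Definition lr_le1 (R : realFieldType) (C : chan R) (z : out C) : bool :=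
  tp C z true <= tp C z false.

Definition Lge (R : realFieldType) (Y : finType) (V : Y -> bool -> R)
  (n k : nat) (y : 'I_(2 ^ n) -> Y) : bool :=
  lr_ge1 (@zout R (@Chan R Y V) n k y).
Definition Lle (R : realFieldType) (Y : finType) (V : Y -> bool -> R)
  (n k : nat) (y : 'I_(2 ^ n) -> Y) : bool :=
  lr_le1 (@zout R (@Chan R Y V) n k y).

Arguments Lge {R Y} V n k y.
Arguments Lle {R Y} V n k y.

Definition first_half (Y : Type) (n : nat) (y : 'I_(2 ^ n.+1) -> Y) :
  'I_(2 ^ n) -> Y := fun j => y (lo j).

Definition prob (R : realFieldType) (Y : finType) (W : Y -> bool -> R)
  (n : nat) (E : pred {ffun 'I_(2 ^ n) -> Y}) : R :=
  \sum_(y : {ffun 'I_(2 ^ n) -> Y} | E y) \prod_(j < 2 ^ n) W (y j) false.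

Arguments prob {R Y} W n E.

Definition gcond (R : realFieldType) (Y : finType) (W : Y -> bool -> R)
  (n : nat) (A B : pred {ffun 'I_(2 ^ n) -> Y}) (b : bool) : R :=
  prob W n (fun y => A y && (B y == b)) / prob W n (fun y => B y == b).

Arguments gcond {R Y} W n A B b.

Definition cond_pos (R : realFieldType) (Y : finType) (W : Y -> bool -> R)
  (n : nat) (B : pred {ffun 'I_(2 ^ n) -> Y}) (b : bool) : Prop :=
  0 < prob W n (fun y => B y == b).
Arguments cond_pos {R Y} W n B b.
Arguments first_half {Y n} y _.

(* Main.v *)
Require Import Defs.
From HB Require Import structures.
From mathcomp Require Import all_boot all_order all_algebra.
From mathcomp Require Import ring lra zify.
Import Order.TTheory GRing.Theory Num.Theory.
Set Implicit Arguments. Unset Strict Implicit.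
Local Open Scope ring_scope.

Section S.
Variables (R : realFieldType) (Y : finType).

Lemma e2 n : (2 ^ n.+1 = 2 ^ n + 2 ^ n)%N.
Proof. by rewrite expnS mul2n addnn. Qed.

Definition fh n (y : {ffun 'I_(2 ^ n.+1) -> Y}) : {ffun 'I_(2 ^ n) -> Y} :=
  [ffun j => y (lo j)].
Definition sh n (y : {ffun 'I_(2 ^ n.+1) -> Y}) : {ffun 'I_(2 ^ n) -> Y} :=
  [ffun j => y (hi j)].
Definition merge n (x1 x2 : {ffun 'I_(2 ^ n) -> Y}) : {ffun 'I_(2 ^ n.+1) -> Y} :=
  [ffun k => match split (cast_ord (e2 n) k) with inl j => x1 j | inr j => x2 j end].

Lemma lo_cast n (j : 'I_(2 ^ n)) : cast_ord (e2 n) (lo j) = unsplit (inl j).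
Proof. by apply: val_inj. Qed.
Lemma hi_cast n (j : 'I_(2 ^ n)) : cast_ord (e2 n) (hi j) = unsplit (inr j).
Proof. by apply: val_inj; rewrite /= addnC. Qed.

Lemma fh_merge n x1 x2 : fh (@merge n x1 x2) = x1.
Proof. by apply/ffunP => j; rewrite !ffunE lo_cast unsplitK. Qed.
Lemma sh_merge n x1 x2 : sh (@merge n x1 x2) = x2.
Proof. by apply/ffunP => j; rewrite !ffunE hi_cast unsplitK. Qed.
Lemma merge_fh n y : @merge n (fh y) (sh y) = y.
Proof.
apply/ffunP => k; rewrite !ffunE.
case: splitP => j /= hj; rewrite ffunE; congr (y _); apply: val_inj => //=.
by rewrite hj addnC.
Qed.

Lemma sum_merge n (G : {ffun 'I_(2 ^ n.+1) -> Y} -> R) :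
  \sum_y G y = \sum_x1 \sum_x2 G (@merge n x1 x2).
Proof.
rewrite pair_big /= (reindex (fun p : {ffun 'I_(2 ^ n) -> Y} * {ffun 'I_(2 ^ n) -> Y} => merge p.1 p.2)) //.
apply: onW_bij; exists (fun y => (fh y, sh y)) => [[x1 x2]|y] /=.
  by rewrite fh_merge sh_merge.
by rewrite merge_fh.
Qed.

Definition pw (W : Y -> bool -> R) n (x : {ffun 'I_(2 ^ n) -> Y}) :=
  \prod_(j < 2 ^ n) W (x j) false.

Lemma pw_merge (W : Y -> bool -> R) n x1 x2 : pw W (@merge n x1 x2) = pw W x1 * pw W x2.
Proof.
rewrite /pw (reindex (cast_ord (esym (e2 n)))) /=; last first.
  by apply: onW_bij; exists (cast_ord (e2 n)) => k; rewrite ?cast_ordK ?cast_ordKV.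
rewrite big_split_ord /=; congr (_ * _); apply: eq_bigr => j _.
  by rewrite ffunE cast_ordKV (@unsplitK (2^n) (2^n) (inl j)).
by rewrite ffunE cast_ordKV (@unsplitK (2^n) (2^n) (inr j)).
Qed.


Lemma prob_split (W : Y -> bool -> R) n (Q : {ffun 'I_(2 ^ n) -> Y} -> {ffun 'I_(2 ^ n) -> Y} -> bool) :
  prob W n.+1 (fun y => Q (fh y) (sh y)) =
  \sum_x1 \sum_(x2 | Q x1 x2) pw W x1 * pw W x2.
Proof.
rewrite /prob big_mkcond sum_merge; apply: eq_bigr => x1 _.
rewrite [RHS]big_mkcond; apply: eq_bigr => x2 _.
rewrite fh_merge sh_merge.
change (\prod_(j < 2 ^ n.+1) W (merge x1 x2 j) false) with (pw W (merge x1 x2)).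
by rewrite pw_merge.
Qed.

Lemma sum_pw1 (W : Y -> bool -> R) n : is_bdmc W -> \sum_(x : {ffun 'I_(2 ^ n) -> Y}) pw W x = 1.
Proof.
case=> _ h1; rewrite /pw -(bigA_distr_bigA (fun (j : 'I_(2 ^ n)) (y : Y) => W y false)).
by rewrite big1 // => j _; apply: h1.
Qed.

Lemma pw_ge0 (W : Y -> bool -> R) n x : is_bdmc W -> 0 <= @pw W n x.
Proof. by case=> h0 _; rewrite /pw; apply: prodr_ge0 => j _; apply: h0. Qed.

Lemma prob_B (W : Y -> bool -> R) n (B : pred {ffun 'I_(2 ^ n) -> Y}) b : is_bdmc W ->
  prob W n.+1 (fun y => B (fh y) == b) = \sum_(x1 | B x1 == b) pw W x1.
Proof.
move=> hW; rewrite (prob_split W (fun x1 _ => B x1 == b)) [RHS]big_mkcond.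
apply: eq_bigr => x1 _; case: (B x1 == b); last by rewrite big_pred0.
by rewrite -big_distrr /= sum_pw1 ?mulr1.
Qed.

Lemma gcond_split (W : Y -> bool -> R) n (A : {ffun 'I_(2 ^ n) -> Y} -> {ffun 'I_(2 ^ n) -> Y} -> bool)
  (B : pred {ffun 'I_(2 ^ n) -> Y}) b : is_bdmc W ->
  gcond W n.+1 (fun y => A (fh y) (sh y)) (fun y => B (fh y)) b =
  (\sum_(x1 | B x1 == b) pw W x1 * \sum_(x2 | A x1 x2) pw W x2) /
  \sum_(x1 | B x1 == b) pw W x1.
Proof.
move=> hW; rewrite /gcond prob_B //; congr (_ / _).
rewrite (prob_split W (fun x1 x2 => A x1 x2 && (B x1 == b))) [RHS]big_mkcond.
apply: eq_bigr => x1 _; case: (B x1 == b).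
  by rewrite big_distrr /=; apply: eq_bigl => x2; rewrite andbT.
by rewrite big_pred0 // => x2; rewrite andbF.
Qed.

Lemma gcond_ext (W : Y -> bool -> R) n (A A' B B' : pred {ffun 'I_(2 ^ n) -> Y}) b :
  (forall y, A y = A' y) -> (forall y, B y = B' y) ->
  gcond W n A B b = gcond W n A' B' b.
Proof.
by move=> hA hB; rewrite /gcond /prob; congr (_ / _); apply: eq_bigl => y;
  rewrite ?hA hB.
Qed.

Lemma prob_ext (W : Y -> bool -> R) n (B B' : pred {ffun 'I_(2 ^ n) -> Y}) :
  (forall y, B y = B' y) -> prob W n B = prob W n B'.
Proof. by move=> hB; apply: eq_bigl. Qed.

Lemma sum_sub (T : finType) (p : T -> R) (P Q : pred T) :
  (forall x, 0 <= p x) -> (forall x, P x -> Q x) ->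
  \sum_(x | P x) p x <= \sum_(x | Q x) p x.
Proof.
move=> h0 hPQ; rewrite [X in _ <= X]big_mkcond [X in X <= _]big_mkcond.
apply: ler_sum => x _; case hP: (P x); first by rewrite hPQ.
by case: (Q x).
Qed.

Lemma coupling (T : finType) (p S : T -> R) (B : pred T) :
  (forall x, 0 <= p x) ->
  0 < \sum_(x | B x == true) p x -> 0 < \sum_(x | B x == false) p x ->
  (forall x x', B x -> ~~ B x' -> S x' <= S x) ->
  (\sum_(x | B x == false) p x * S x) / (\sum_(x | B x == false) p x) <=
  (\sum_(x | B x == true) p x * S x) / (\sum_(x | B x == true) p x).
Proof.
move=> h0 h1 h2 hS.
rewrite ler_pdivrMr // mulrAC ler_pdivlMr //.
rewrite big_distrl [X in _ <= X]big_distrl /=.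
under eq_bigr do rewrite big_distrr.
under [X in _ <= X]eq_bigr do rewrite big_distrr.
rewrite [X in _ <= X]exchange_big /=.
apply: ler_sum => x' hx'; apply: ler_sum => x hx.
move: hx hx' => /eqP hx /eqP hx'.
have h : S x' <= S x by apply: hS; rewrite ?hx ?hx'.
rewrite (_ : p x' * S x' * p x = (p x * p x') * S x') ?[X in _ <= X](_ : _ = (p x * p x') * S x); try ring.
by apply: ler_wpM2l => //; apply: mulr_ge0.
Qed.

End S.

Section C.
Variables (R : realFieldType) (Y : finType) (V : Y -> bool -> R).
Local Notation CC := (@Chan R Y V).

Lemma zout_ext n k (x x' : 'I_(2 ^ n) -> Y) :
  (forall j, x j = x' j) -> zout CC n k x = zout CC n k x'.
Proof.
elim: n k x x' => [|n IH] k x x' h /=; first by rewrite h.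
by rewrite (IH _ _ (fun j => x' (lo j))) // (IH _ (fun j => x (hi j)) (fun j => x' (hi j))).
Qed.

Lemma tp_ge0 n k z u : (forall y u, 0 <= V y u) -> 0 <= tp (synth CC n k) z u.
Proof.
move=> hV; elim: n k z u => [|n IH] k /=; first by [].
case: (odd k) => z u /=.
  by rewrite mulr_ge0 // mulr_ge0 // invr_ge0 ler0n.
by apply: sumr_ge0 => u2 _; rewrite mulr_ge0 // mulr_ge0 // invr_ge0 ler0n.
Qed.

Definition az n k u (x : 'I_(2 ^ n) -> Y) := tp (synth CC n k) (zout CC n k x) u.
Arguments az : clear implicits.


Lemma az_fh n k u (y : {ffun 'I_(2 ^ n.+1) -> Y}) :
  az n k u (fun j => y (lo j)) = az n k u (fh y).
Proof. by rewrite /az (@zout_ext n k _ (fh y)) // => j; rewrite ffunE. Qed.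
Lemma az_sh n k u (y : {ffun 'I_(2 ^ n.+1) -> Y}) :
  az n k u (fun j => y (hi j)) = az n k u (sh y).
Proof. by rewrite /az (@zout_ext n k _ (sh y)) // => j; rewrite ffunE. Qed.

Definition plusA n m u (x1 x2 : 'I_(2 ^ n) -> Y) :=
  2^-1 * az n m u x1 * az n m u x2.
Definition minusA n m u (x1 x2 : 'I_(2 ^ n) -> Y) :=
  2^-1 * az n m (~~ u) x1 * az n m true x2 + 2^-1 * az n m u x1 * az n m false x2.
Arguments plusA : clear implicits.
Arguments minusA : clear implicits.

Lemma Lge_step n k (y : {ffun 'I_(2 ^ n.+1) -> Y}) :
  Lge V n.+1 k y = if odd k then plusA n k./2 false (fh y) (sh y) <= plusA n k./2 true (fh y) (sh y)
  else minusA n k./2 false (fh y) (sh y) <= minusA n k./2 true (fh y) (sh y).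
Proof.
rewrite /plusA /minusA -!az_fh -!az_sh /Lge /lr_ge1 /=.
by case: (odd k) => //=; rewrite !big_bool.
Qed.

Lemma Lle_step n k (y : {ffun 'I_(2 ^ n.+1) -> Y}) :
  Lle V n.+1 k y = if odd k then plusA n k./2 true (fh y) (sh y) <= plusA n k./2 false (fh y) (sh y)
  else minusA n k./2 true (fh y) (sh y) <= minusA n k./2 false (fh y) (sh y).
Proof.
rewrite /plusA /minusA -!az_fh -!az_sh /Lle /lr_le1 /=.
by case: (odd k) => //=; rewrite !big_bool.
Qed.

Lemma Lge_fh n k (y : {ffun 'I_(2 ^ n.+1) -> Y}) :
  Lge V n k (first_half y) = (az n k false (fh y) <= az n k true (fh y)).
Proof. by rewrite -!az_fh. Qed.
Lemma Lle_fh n k (y : {ffun 'I_(2 ^ n.+1) -> Y}) :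
  Lle V n k (first_half y) = (az n k true (fh y) <= az n k false (fh y)).
Proof. by rewrite -!az_fh. Qed.

End C.

Lemma final' (R : realFieldType) (Y : finType) (W : Y -> bool -> R) n
  (A0 B0 : pred {ffun 'I_(2 ^ n.+1) -> Y})
  (A : {ffun 'I_(2 ^ n) -> Y} -> {ffun 'I_(2 ^ n) -> Y} -> bool)
  (B : pred {ffun 'I_(2 ^ n) -> Y}) :
  is_bdmc W -> (forall y, A0 y = A (fh y) (sh y)) -> (forall y, B0 y = B (fh y)) ->
  (forall x x', B x -> ~~ B x' ->
     \sum_(x2 | A x' x2) pw W x2 <= \sum_(x2 | A x x2) pw W x2) ->
  cond_pos W n.+1 B0 true -> cond_pos W n.+1 B0 false ->
  gcond W n.+1 A0 B0 false <= gcond W n.+1 A0 B0 true.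
Proof.
move=> hW hA hB hc; rewrite /cond_pos.
rewrite (@prob_ext _ _ W n.+1 (fun y => B0 y == true) (fun y => B (fh y) == true));
  last by move=> y; rewrite hB.
rewrite (@prob_ext _ _ W n.+1 (fun y => B0 y == false) (fun y => B (fh y) == false));
  last by move=> y; rewrite hB.
rewrite !(@gcond_ext _ _ W n.+1 A0 (fun y => A (fh y) (sh y)) B0 (fun y => B (fh y))) //.
rewrite !prob_B // => h1 h2; rewrite !gcond_split //.
apply: coupling => // x; exact: pw_ge0.
Qed.

Lemma nat_facts i : (1 <= i)%N ->
  [/\ odd (2 * i).-1, ((2 * i).-1)./2 = i.-1, odd (2 * i - 1).-1 = false &
      ((2 * i - 1).-1)./2 = i.-1].
Proof.
case: i => [|m] // _.
have -> : (2 * m.+1).-1 = (true + m.*2)%N by rewrite mulnS mul2n.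
have -> : (2 * m.+1 - 1).-1 = (false + m.*2)%N by rewrite mulnS mul2n; case: m => // m; rewrite doubleS; lia.
by rewrite !half_bit_double /= odd_double.
Qed.
Lemma ltr_subr_gt0 (R : realFieldType) (x y : R) : x < y -> 0 < y - x.
Proof. by rewrite subr_gt0. Qed.
Lemma ler_subr_ge0 (R : realFieldType) (x y : R) : x <= y -> 0 <= y - x.
Proof. by rewrite subr_ge0. Qed.
Section A.
Variable R : realFieldType.
Lemma L_plus (a0 a1 c0 c1 b0 b1 : R) : 0 <= a0 -> 0 <= a1 -> 0 <= c0 -> 0 <= c1 ->
  0 <= b0 -> 0 <= b1 -> a0 <= a1 -> c1 < c0 ->
  2^-1 * c0 * b0 <= 2^-1 * c1 * b1 -> 2^-1 * a0 * b0 <= 2^-1 * a1 * b1.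
Proof.
move=> ha0 ha1 hc0 hc1 hb0 hb1 ha hc.
have P2 : 0 < (2 : R)^-1 by rewrite invr_gt0 ltr0n.
rewrite -!mulrA !ler_pM2l // => h.
have hb : b0 <= b1.
  rewrite leNgt; apply/negP => hb.
  have e1 : c1 * b1 <= c0 * b1 by apply: ler_wpM2r => //; apply: ltW.
  have e2 : c0 * b1 < c0 * b0 by rewrite ltr_pM2l // (le_lt_trans hc1 hc).
  by move: (le_lt_trans (le_trans h e1) e2); rewrite ltxx.
by apply: (le_trans (ler_wpM2l ha0 hb)); apply: ler_wpM2r.
Qed.
Lemma L_m1 (c0 c1 b0 b1 : R) : c1 < c0 ->
  2^-1 * c1 * b1 + 2^-1 * c0 * b0 <= 2^-1 * c0 * b1 + 2^-1 * c1 * b0 -> b0 <= b1.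
Proof.
move=> hc h; rewrite leNgt; apply/negP => hb.
have := mulr_gt0 (ltr_subr_gt0 hc) (ltr_subr_gt0 hb).
move: h; nra.
Qed.
Lemma L_m2 (a0 a1 b0 b1 : R) : a0 <= a1 -> b1 <= b0 ->
  2^-1 * a1 * b1 + 2^-1 * a0 * b0 <= 2^-1 * a0 * b1 + 2^-1 * a1 * b0.
Proof.
move=> ha hb; have := mulr_ge0 (ler_subr_ge0 ha) (ler_subr_ge0 hb).
nra.
Qed.
End A.

Theorem proposition6 (R : realFieldType) (Y : finType) (W V : Y -> bool -> R)
    (n i : nat) :
  is_bdmc W -> is_bdmc V -> (1 <= i <= 2 ^ n)%N ->
  (* (a) j = 2i *)
  ((cond_pos W n.+1 (fun y => Lge V n i.-1 (first_half y)) true ->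
    cond_pos W n.+1 (fun y => Lge V n i.-1 (first_half y)) false ->
    gcond W n.+1 (fun y => Lge V n.+1 (2 * i).-1 y)
            (fun y => Lge V n i.-1 (first_half y)) false
    <= gcond W n.+1 (fun y => Lge V n.+1 (2 * i).-1 y)
            (fun y => Lge V n i.-1 (first_half y)) true) /\
   (cond_pos W n.+1 (fun y => Lle V n i.-1 (first_half y)) true ->
    cond_pos W n.+1 (fun y => Lle V n i.-1 (first_half y)) false ->
    gcond W n.+1 (fun y => Lle V n.+1 (2 * i).-1 y)
            (fun y => Lle V n i.-1 (first_half y)) false
    <= gcond W n.+1 (fun y => Lle V n.+1 (2 * i).-1 y)
            (fun y => Lle V n i.-1 (first_half y)) true)) /\
  (* (b) j = 2i - 1 *)
  (prob W n (fun y => Lge V n i.-1 y) <= prob W n (fun y => Lle V n i.-1 y) ->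
   (cond_pos W n.+1 (fun y => Lge V n i.-1 (first_half y)) true ->
    cond_pos W n.+1 (fun y => Lge V n i.-1 (first_half y)) false ->
    gcond W n.+1 (fun y => Lge V n.+1 (2 * i - 1).-1 y)
            (fun y => Lge V n i.-1 (first_half y)) false
    <= gcond W n.+1 (fun y => Lge V n.+1 (2 * i - 1).-1 y)
            (fun y => Lge V n i.-1 (first_half y)) true) /\
   (cond_pos W n.+1 (fun y => Lle V n i.-1 (first_half y)) true ->
    cond_pos W n.+1 (fun y => Lle V n i.-1 (first_half y)) false ->
    gcond W n.+1 (fun y => Lle V n.+1 (2 * i - 1).-1 y)
            (fun y => Lle V n i.-1 (first_half y)) false
    <= gcond W n.+1 (fun y => Lle V n.+1 (2 * i - 1).-1 y)
            (fun y => Lle V n i.-1 (first_half y)) true)).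
Proof.
move=> hW hV /andP[hi1 _].
have [o1 h1 o2 h2] := nat_facts hi1.
have a0 : forall u (x : 'I_(2 ^ n) -> Y), 0 <= az V i.-1 u x.
  by move=> u x; apply: tp_ge0; case: hV.
have pw0 : forall x : {ffun 'I_(2 ^ n) -> Y}, 0 <= pw W x.
  by move=> x; exact: pw_ge0.
have P2 : 0 < (2 : R)^-1 by rewrite invr_gt0 ltr0n.
split; [split|move=> hP; split].
- apply: (@final' _ _ W n _ _ (fun x1 x2 => plusA V i.-1 false x1 x2 <= plusA V i.-1 true x1 x2)
     (fun x => az V i.-1 false x <= az V i.-1 true x) hW).
  + by move=> y; rewrite Lge_step o1 h1.
  + by move=> y; rewrite Lge_fh.
  + move=> x x' hB hB'; apply: sum_sub => // x2; rewrite /plusA.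
    rewrite -ltNge in hB'.
    by apply: L_plus.
- apply: (@final' _ _ W n _ _ (fun x1 x2 => plusA V i.-1 true x1 x2 <= plusA V i.-1 false x1 x2)
     (fun x => az V i.-1 true x <= az V i.-1 false x) hW).
  + by move=> y; rewrite Lle_step o1 h1.
  + by move=> y; rewrite Lle_fh.
  + move=> x x' hB hB'; apply: sum_sub => // x2; rewrite /plusA.
    rewrite -ltNge in hB'.
    by apply: L_plus.
- apply: (@final' _ _ W n _ _ (fun x1 x2 => minusA V i.-1 false x1 x2 <= minusA V i.-1 true x1 x2)
     (fun x => az V i.-1 false x <= az V i.-1 true x) hW).
  + by move=> y; rewrite Lge_step o2 h2.
  + by move=> y; rewrite Lge_fh.
  + move=> x x' hB hB'.
    apply: (@le_trans _ _ (prob W n (fun y => Lge V n i.-1 y))).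
      apply: sum_sub => // x2; rewrite /minusA /=.
      change (Lge V n i.-1 x2) with (az V i.-1 false x2 <= az V i.-1 true x2).
      rewrite -ltNge in hB'.
      by apply: L_m1.
    apply: (le_trans hP).
    apply: sum_sub => // x2; rewrite /minusA /=.
    change (Lle V n i.-1 x2) with (az V i.-1 true x2 <= az V i.-1 false x2).
    by move=> hL; apply: L_m2.
- apply: (@final' _ _ W n _ _ (fun x1 x2 => minusA V i.-1 true x1 x2 <= minusA V i.-1 false x1 x2)
     (fun x => az V i.-1 true x <= az V i.-1 false x) hW).
  + by move=> y; rewrite Lle_step o2 h2.
  + by move=> y; rewrite Lle_fh.
  + move=> x x' hB hB'.
    apply: (@le_trans _ _ (prob W n (fun y => Lge V n i.-1 y))).
      apply: sum_sub => // x2; rewrite /minusA /=.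
      change (Lge V n i.-1 x2) with (az V i.-1 false x2 <= az V i.-1 true x2).
      rewrite -ltNge in hB'.
      by apply: L_m1.
    apply: (le_trans hP).
    apply: sum_sub => // x2; rewrite /minusA /=.
    change (Lle V n i.-1 x2) with (az V i.-1 true x2 <= az V i.-1 false x2).
    by move=> hL; apply: L_m2.
Qed.
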